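(* Consider the multicast coalitional game with player set $\mathcal{N}=\{1,\ldots,N\}$ and value function $$v(S)=\sum_{i\in S}U_i-\sum_{i\in S}\frac{\alpha_i}{R_S}-\frac{\beta+\gamma}{R_S},\qquad R_S=\min_{i\in S}R_i,$$ for nonempty $S\subseteq\mathcal{N}$. Suppose $R_i=R_0$ and $P_{Rx,i}=P_{Rx}$ for all $i\in\mathcal{N}$. Then the core of the game is non-empty.
   Context: A transmitter multicasts a file of size $X>0$ bits to users $\mathcal{N}=\{1,\dots,N\}$. User $i$ has valuation $U_i\in\mathbb{R}$ for the file, downloads from the transmitter at rate $R_i>0$, and consumes receive power $P_{Rx,i}>0$; the transmitter transmits at power $P_{Tx}>0$. Costs per unit energy are $a>0$ at users and $b>0$ at the transmitter, and the bandwidth cost per second is $w>0$. Set $\alpha_i=aP_{Rx,i}X$, $\beta=bP_{Tx}X$, $\gamma=wX$. This defines a transferable-utility coalitional game $(\mathcal{N},v)$ with $v$ as in the claim (coalition $S$ receives the file by multicast at rate $R_S$). The core is the set of payoff vectors $(x_1,\dots,x_N)\in\mathbb{R}^N$ with $\sum_{i\in\mathcal{N}}x_i=v(\mathcal{N})$ and $\sum_{i\in S}x_i\ge v(S)$ for every nonempty $S\subseteq\mathcal{N}$. *)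

(* Defs.v *)
From HB Require Import structures.
From mathcomp Require Import all_boot all_order all_algebra.
Set Implicit Arguments. Unset Strict Implicit. Unset Printing Implicit Defensive.
Import Order.TTheory GRing.Theory Num.Theory.
Local Open Scope ring_scope.

(* R_S = min_{i in S} Rate i.  The big-min is seeded with the maximum of all
   rates (an upper bound), so for nonempty S this is exactly min_{i in S}. *)
Definition rate_of (R : realFieldType) (N : nat) (Rate : 'I_N -> R)
    (S : {set 'I_N}) : R :=
  \big[Num.min/ \big[Num.max/0]_(j < N) Rate j]_(i in S) Rate i.

Definition mc_value (R : realFieldType) (N : nat) (U alpha Rate : 'I_N -> R)
    (beta gamma : R) (S : {set 'I_N}) : R :=
  if S == set0 then 0 else
  \sum_(i in S) U i - \sum_(i in S) alpha i / rate_of Rate S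
    - (beta + gamma) / rate_of Rate S.

Definition in_core (R : realFieldType) (N : nat) (v : {set 'I_N} -> R)
    (x : 'I_N -> R) : Prop :=
  \sum_(i < N) x i = v setT /\
  forall S : {set 'I_N}, S != set0 -> v S <= \sum_(i in S) x i.

Definition core_nonempty (R : realFieldType) (N : nat)
    (v : {set 'I_N} -> R) : Prop := exists x : 'I_N -> R, in_core v x.

(* Main.v *)
Require Import Defs.
From HB Require Import structures.
From mathcomp Require Import all_boot all_order all_algebra.
Import Order.TTheory GRing.Theory Num.Theory.
Local Open Scope ring_scope.

Lemma iter_min (R : realFieldType) (k : nat) (r m : R) :
  (0 < k)%N -> iter k (Num.min r) m = Num.min r m.
Proof.
elim: k => [//|[|k] IH _]; first by [].
by rewrite iterS IH // minA minxx.
Qed.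

Lemma iter_max (R : realFieldType) (k : nat) (r m : R) :
  (0 < k)%N -> iter k (Num.max r) m = Num.max r m.
Proof.
elim: k => [//|[|k] IH _]; first by [].
by rewrite iterS IH // maxA maxxx.
Qed.

Lemma rate_const (R : realFieldType) (N : nat) (Rate : 'I_N -> R) (R0 : R)
  (S : {set 'I_N}) : 0 < R0 -> (forall i, Rate i = R0) -> S != set0 ->
  rate_of Rate S = R0.
Proof.
move=> R0p HR SN.
have [i iS] := set0Pn S SN.
have N0 : (0 < N)%N := leq_ltn_trans (leq0n i) (ltn_ord i).
rewrite /rate_of (eq_bigr (fun _ => R0)) // big_const.
rewrite (eq_bigr (fun _ => R0)) // big_const card_ord iter_max //.
rewrite iter_min; last by rewrite card_gt0; exact: SN.
by rewrite (max_idPl (ltW R0p)) minxx.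
Qed.

Theorem theorem3 (R : realFieldType) (N : nat)
    (X a b w PTx : R) (U Rate PRx : 'I_N -> R) (R0 PRx0 : R) :
  0 < X -> 0 < a -> 0 < b -> 0 < w -> 0 < PTx ->
  (forall i, 0 < Rate i) -> (forall i, 0 < PRx i) ->
  (forall i, Rate i = R0) -> (forall i, PRx i = PRx0) ->
  let alpha := fun i => a * PRx i * X in
  let beta := b * PTx * X in
  let gamma := w * X in
  core_nonempty (mc_value U alpha Rate beta gamma).
Proof.
move=> X0 a0 b0 w0 P0 Rp PRp HR HP alpha beta gamma.
case: N U Rate PRx Rp PRp HR HP alpha => [|n] U Rate PRx Rp PRp HR HP alpha.
  exists (fun _ => 0); split.
    rewrite big_ord0 /mc_value.
    by have -> : [set: 'I_0] == set0 by apply/eqP/setP => -[].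
  by move=> S /set0Pn [[]].
have R0p : 0 < R0 by rewrite -(HR ord0).
set c := beta + gamma.
have cp : 0 < c by rewrite addr_gt0 // ?mulr_gt0.
exists (fun i => U i - alpha i / R0 - c / (n.+1%:R * R0)).
have key : forall S : {set 'I_n.+1}, S != set0 ->
  \sum_(i in S) (U i - alpha i / R0 - c / (n.+1%:R * R0)) =
  \sum_(i in S) U i - \sum_(i in S) alpha i / R0 - (#|S|%:R * c / (n.+1%:R * R0)).
  move=> S _; rewrite !sumrB sumr_const; congr (_ - _); rewrite /=.
  by rewrite -mulrA [in RHS]mulr_natl mulrnAl.
have Tn : [set: 'I_n.+1] != set0 by apply/set0Pn; exists ord0.
split.
  rewrite (eq_bigl (fun i => i \in [set: 'I_n.+1])); last by move=> i; rewrite in_setT.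
  rewrite key // /mc_value (negbTE Tn) (@rate_const _ _ _ _ _ R0p HR Tn).
  rewrite cardsT card_ord; congr (_ - _).
  by rewrite invfM mulrA -[_ * c * _]mulrA [c * _]mulrC !mulrA mulfV ?mul1r ?pnatr_eq0.
move=> S SN; rewrite key // /mc_value (negbTE SN) (@rate_const _ _ _ _ _ R0p HR SN).
rewrite lerD2l lerN2.
rewrite invfM mulrA ler_pM2r ?invr_gt0 // mulrAC ler_piMl ?(ltW cp) //.
rewrite ler_pdivrMr ?ltr0n // mul1r ler_nat.
by rewrite -[X in (_ <= X)%N](card_ord n.+1) max_card.
Qed.
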